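(* Let $d\ge0$ be fixed, let $n\ge3$ and $t\ge2$ satisfy $3\ln\big((d+1)e^2\big)\ln t\le \ln n$, and let $G_n\sim G(n,d/n)$. Then the probability that there exist an integer $k\in[2,t]$ and a $k$-vertex subgraph of $G_n$ with at least $k+\frac{k}{\ln k}$ edges is at most $\frac{15}{n}$; that is, $$\Pr\Big[\sum_{k=2}^{t}\ \sum_{j\ge k+k/\ln k} s_k(G_n,j)>0\Big]\le \frac{15}{n}.$$
   Context: $G(n,p)$ is the random graph on $[n]$ with each edge present independently with probability $p$ (the hypotheses imply $d/n\le1$). For a graph $G$, $k\ge1$ and $j\ge0$, $s_k(G,j)$ is the number of unlabeled (isomorphism classes of) subgraphs of $G$ with exactly $k$ vertices and $j$ edges. *)

(* Defs.v *)
From mathcomp Require Import all_boot all_order all_algebra.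
From mathcomp Require Import all_classical all_reals all_analysis.
Set Implicit Arguments. Unset Strict Implicit. Unset Printing Implicit Defensive.
Import Order.TTheory GRing.Theory Num.Theory.
Local Open Scope ring_scope.

Definition pairs (n : nat) : {set {set 'I_n}} := [set e : {set 'I_n} | #|e| == 2%N].

Definition is_graph (n : nat) (E : {set {set 'I_n}}) : bool := E \subset pairs n.

(* Probability of an event under G(n,p): each of the #|pairs n| potential
   edges present independently with probability p. *)
Definition Gnp_prob (R : realType) (n : nat) (p : R)
    (P : {set {set 'I_n}} -> bool) : R :=
  \sum_(E : {set {set 'I_n}} | is_graph E && P E)
     p ^+ #|E| * (1 - p) ^+ (#|pairs n| - #|E|).

(* G has a subgraph with exactly k vertices and j edges, i.e. s_k(G,j) > 0:
   a vertex set S of size k and an edge set F \subset E with all edges inside S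
   and #|F| = j. *)
Definition has_subgraph (n : nat) (E : {set {set 'I_n}}) (k j : nat) : bool :=
  [exists S : {set 'I_n}, [exists F : {set {set 'I_n}},
     [&& #|S| == k, F \subset E, [forall e in F, e \subset S] & #|F| == j]]].

Definition dense_small_event (R : realType) (n t : nat)
    (E : {set {set 'I_n}}) : bool :=
  [exists k : 'I_t.+1, [exists j : 'I_(#|pairs n|).+1,
     [&& (2 <= k)%N,
         (k%:R + k%:R / ln (k%:R : R) <= (j : nat)%:R :> R)
       & has_subgraph E k j]]].

(* Main.v *)
Require Import Defs.
From mathcomp Require Import all_boot all_order all_algebra.
From mathcomp Require Import all_classical all_reals all_analysis.
From mathcomp Require Import lra zify.
Set Implicit Arguments. Unset Strict Implicit. Unset Printing Implicit Defensive.
Import Order.TTheory GRing.Theory Num.Theory.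
Local Open Scope ring_scope.

Lemma regroup (R : nmodType) (X : finType) (P : pred X) (c : X -> nat) (M : nat)
  (g : X -> R) : (forall x, (c x < M)%N) ->
  \sum_(x | P x) g x = \sum_(j < M) \sum_(x | P x && (c x == j)) g x.
Proof.
move=> H.
rewrite (partition_big (fun x => Ordinal (H x)) xpredT) //=.
Qed.

Lemma sumsub (R : comNzRingType) (X : finType) (B F : {set X}) (x y : R) :
  F \subset B ->
  \sum_(E : {set X} | (E \subset B) && (F \subset E)) x ^+ #|E| * y ^+ (#|B| - #|E|)
  = x ^+ #|F| * (x + y) ^+ (#|B| - #|F|).
Proof.
move=> sFB.
pose f i := if i \in B then x else 0.
pose g i := if i \in B then (if i \in F then 0 else y) else 1.
have H := @bigA_distr R 0 1 *%R +%R X f g.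
have -> : x ^+ #|F| * (x + y) ^+ (#|B| - #|F|) = \prod_i (f i + g i).
  rewrite (eq_bigr (fun i => (if i \in F then x else 1) * (if i \in B :\: F then x + y else 1))); last first.
    move=> i _; rewrite /f /g !finset.inE.
    case: (boolP (i \in F)) => iF /=.
      by rewrite (fintype.subsetP sFB _ iF) addr0 mulr1.
    by case: (i \in B); rewrite ?mul1r ?add0r.
  rewrite big_split /= -!big_mkcond /= !prodr_const cardsD (finset.setIidPr sFB).
  by [].
rewrite H big_mkcond /=; apply: eq_big => // J _.
rewrite (bigID (mem J)) /=.
case: (boolP (J \subset B)) => sJB /=; last first.
  have [i iJ iNB] : exists2 i, i \in J & i \notin B.
    by move/subsetPn: sJB => [i ? ?]; exists i.
  by rewrite (bigD1 i) //= iJ /f (negbTE iNB) !mul0r.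
case: (boolP (F \subset J)) => sFJ /=; last first.
  have [i iF iNJ] : exists2 i, i \in F & i \notin J.
    by move/subsetPn: sFJ => [i ? ?]; exists i.
  rewrite [X in _ * X](bigD1 i) //= (negbTE iNJ) /g (fintype.subsetP sFB _ iF) iF.
  by rewrite mul0r mulr0.
rewrite (eq_bigr (fun _ => x)); last by move=> i /= iJ; rewrite iJ /f (fintype.subsetP sJB _ iJ).
rewrite prodr_const.
rewrite (eq_bigr (fun i => if i \in B :\: J then y else 1)); last first.
  move=> i /= iNJ; rewrite (negbTE iNJ) /g !finset.inE iNJ /=.
  case: (i \in B) => //; case: (boolP (i \in F)) => // iF.
  by rewrite (fintype.subsetP sFJ _ iF) in iNJ.
rewrite -big_mkcondr /=.
rewrite (eq_bigl (fun i => i \in B :\: J)); last first.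
  by move=> i /=; rewrite !finset.inE; case: (i \in J).
by rewrite prodr_const cardsD (finset.setIidPr sJB).
Qed.

Lemma cnt_bound (R : realType) (X : finType) (A : {set X}) (j K : nat) :
  (0 < j)%N -> (0 < K)%N -> (#|A| <= K)%N ->
  \sum_(F : {set X} | (F \subset A) && (#|F| == j)) (1 : R)
    <= expR (j%:R) * (K%:R / j%:R) ^+ j.
Proof.
move=> j0 K0 AK.
pose l : R := j%:R / K%:R.
have l0 : 0 < l by rewrite divr_gt0 // ltr0n.
have E1 : \sum_(F : {set X} | (F \subset A) && (#|F| == j)) (1 : R)
   = \sum_(F : {set X} | (F \subset A) && (#|F| == j)) (l ^+ #|F| * 1 ^+ (#|A| - #|F|)) / l ^+ j.
  apply: eq_bigr => F /andP[_ /eqP ->]; rewrite expr1n mulr1 divff //.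
  by rewrite expf_neq0 // gt_eqF.
have E2 : \sum_(F : {set X} | (F \subset A) && (#|F| == j)) (l ^+ #|F| * 1 ^+ (#|A| - #|F|)) / l ^+ j
   <= \sum_(F : {set X} | (F \subset A) && (finset.set0 \subset F)) (l ^+ #|F| * 1 ^+ (#|A| - #|F|)) / l ^+ j.
  rewrite [X in _ <= X]big_mkcond [X in X <= _]big_mkcond /=.
  apply: ler_sum => F _; rewrite (finset.sub0set F) andbT.
  case: (F \subset A) => //=; case: (#|F| == j) => //.
  by rewrite divr_ge0 // ?mulr_ge0 ?exprn_ge0 // ltW.
rewrite E1 (le_trans E2) //.
rewrite -big_distrl /= sumsub ?finset.sub0set // cards0 expr0 mul1r subn0.
have E3 : (l + 1) ^+ #|A| <= expR (j%:R).
  apply: (@le_trans _ _ ((1 + l) ^+ K)).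
    rewrite addrC; apply: ler_weXn2l => //.
    by rewrite -{1}[1]addr0 lerD2l ltW.
  apply: (@le_trans _ _ (expR l ^+ K)).
    apply: lerXn2r; [by rewrite nnegrE addr_ge0 // ltW | by rewrite nnegrE expR_ge0 | exact: expR_ge1Dx].
  by rewrite -expRM_natl /l mulrCA divff ?mulr1 // pnatr_eq0 -lt0n.
apply: ler_pM => //.
  by rewrite exprn_ge0 // addr_ge0 // ltW.
  by rewrite invr_ge0 exprn_ge0 // ltW.
by rewrite /l -exprVn invf_div.
Qed.

Lemma cardAS n (S : {set 'I_n}) :
  (#|[set e in pairs n | e \subset S]| <= #|S| * #|S|)%N.
Proof.
rewrite -cardsX.
apply: (leq_trans _ (leq_imset_card (fun xy : 'I_n * 'I_n => [set xy.1; xy.2]) _)).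
apply: subset_leq_card; apply/fintype.subsetP => e.
rewrite finset.inE /pairs finset.inE => /andP[/cards2P [x [y [_ exy]]] eS].
apply/imsetP; exists (x, y) => //.
rewrite finset.inE /=; apply/andP; split; apply: (fintype.subsetP eS); by rewrite exy !finset.inE eqxx ?orbT.
Qed.

Lemma gnp_sup (R : realType) n (p : R) (F : {set {set 'I_n}}) :
  F \subset pairs n ->
  \sum_(E | is_graph E)
     (if F \subset E then p ^+ #|E| * (1 - p) ^+ (#|pairs n| - #|E|) else 0)
  = p ^+ #|F|.
Proof.
move=> sF.
rewrite -big_mkcondr /= /is_graph sumsub // addrCA subrr addr0 expr1n mulr1 //.
Qed.

Definition Wp (R : realType) n t (S : {set 'I_n}) (F : {set {set 'I_n}}) : bool :=
  [&& (2 <= #|S|)%N, (#|S| <= t)%N, F \subset pairs n,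
      [forall e in F, e \subset S]
    & (#|S|%:R + #|S|%:R / ln (#|S|%:R : R) <= #|F|%:R :> R)].

Lemma union_bound (R : realType) n t (p : R) : 0 <= p <= 1 ->
  @Gnp_prob R n p (@dense_small_event R n t)
  <= \sum_(S : {set 'I_n}) \sum_(F | @Wp R n t S F) p ^+ #|F|.
Proof.
move=> /andP[p0 p1].
pose w (E : {set {set 'I_n}}) := p ^+ #|E| * (1 - p) ^+ (#|pairs n| - #|E|).
have w0 E : 0 <= w E by rewrite mulr_ge0 // exprn_ge0 // subr_ge0.
pose G (E : {set {set 'I_n}}) := \sum_(S : {set 'I_n}) \sum_(F | @Wp R n t S F) (if F \subset E then w E else 0).
have G0 (E : {set {set 'I_n}}) : 0 <= G E.
  by apply: sumr_ge0 => S _; apply: sumr_ge0 => F _; case: ifP.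
have step (E : {set {set 'I_n}}) : is_graph E -> @dense_small_event R n t E -> w E <= G E.
  move=> gE /existsP [k /existsP [j /and3P [k2 kj /existsP [S /existsP [F]]]]].
  move=> /and4P [/eqP Sk FE /forallP FS /eqP Fj].
  have W : @Wp R n t S F.
    apply/and5P; split.
    - by rewrite Sk.
    - by rewrite Sk -ltnS ltn_ord.
    - exact: (fintype.subset_trans FE gE).
    - by apply/forallP => e; exact: FS.
    - by rewrite Sk Fj.
  rewrite /G (bigD1 S) //= (bigD1 F) //= FE.
  rewrite -addrA lerDl addr_ge0 //.
    by apply: sumr_ge0 => F' _; case: ifP.
  by apply: sumr_ge0 => S' _; apply: sumr_ge0 => F' _; case: ifP.
apply: (@le_trans _ _ (\sum_(E | is_graph E) G E)).
  rewrite /Gnp_prob [X in _ <= X]big_mkcond [X in X <= _]big_mkcond /=.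
  apply: ler_sum => E _.
  case: (boolP (is_graph E)) => gE //=.
  by case: (boolP (@dense_small_event R n t E)) => eE //=; apply: step.
rewrite /G exchange_big /=; apply: ler_sum => S _.
rewrite exchange_big /=; apply: ler_sum => F /and5P [_ _ sF _ _].
by rewrite gnp_sup.
Qed.

Definition thr (R : realType) (k j : nat) : bool :=
  (k%:R + k%:R / ln (k%:R : R) <= j%:R :> R).

Lemma per_S (R : realType) n t (p : R) (S : {set 'I_n}) : 0 <= p ->
  \sum_(F | @Wp R n t S F) p ^+ #|F| <=
  (if (2 <= #|S|)%N && (#|S| <= t)%N then
     \sum_(j < #|{set 'I_n}|.+1)
       (if thr R (#|S|) j && (j <= #|S| * #|S|)%N
        then p ^+ j * (expR (j%:R) * ((#|S| * #|S|)%:R / j%:R) ^+ j) else 0)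
   else 0).
Proof.
move=> p0.
case: (boolP ((2 <= #|S|)%N && (#|S| <= t)%N)) => H; last first.
  rewrite big1 // => F /and5P [a b _ _ _]; by rewrite a b in H.
move/andP: H => [S2 St].
pose A := [set e in pairs n | e \subset S].
rewrite (eq_bigl (fun F : {set {set 'I_n}} => (F \subset A) && thr R (#|S|) (#|F|))); last first.
  move=> F; rewrite /Wp S2 St /=.
  rewrite /thr andbA; congr (_ && _).
  apply/andP/fintype.subsetP => [[sF /forallP FS] e eF|sA].
    by rewrite finset.inE (fintype.subsetP sF _ eF) /=; move: (FS e); rewrite eF.
  split.
    by apply/fintype.subsetP => e eF; move: (sA e eF); rewrite finset.inE => /andP[].
  by apply/forallP => e; apply/implyP => eF; move: (sA e eF); rewrite finset.inE => /andP[].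
rewrite (@regroup _ _ _ (fun F : {set {set 'I_n}} => #|F|) #|{set 'I_n}|.+1); last first.
  by move=> F; rewrite ltnS max_card.
apply: ler_sum => j _.
rewrite (eq_bigl (fun F : {set {set 'I_n}} => ((F \subset A) && (#|F| == j)) && thr R (#|S|) j)); last first.
  by move=> F; case: eqP => [->|_]; rewrite ?andbT ?andbF.
case: (boolP (thr R (#|S|) j)) => Hj; last first.
  by rewrite big1 // => F; rewrite andbF.
rewrite /=.
have j0 : (0 < j)%N.
  rewrite lt0n; apply/negP => /eqP j0; move: Hj; rewrite /thr j0.
  have k0 : (0 : R) < #|S|%:R by rewrite ltr0n (leq_trans _ S2).
  have l0 : 0 < ln (#|S|%:R : R) by apply: ln_gt0; rewrite ltr1n.
  have : 0 < #|S|%:R / ln (#|S|%:R : R) by rewrite divr_gt0.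
  by move=> q; apply/negP; rewrite -ltNge; apply: ltr_pwDr.
rewrite (eq_bigl (fun F : {set {set 'I_n}} => (F \subset A) && (#|F| == j))); last by move=> F; rewrite andbT.
rewrite (eq_bigr (fun _ : {set {set 'I_n}} => p ^+ j * 1)); last by move=> F /andP[_ /eqP ->]; rewrite mulr1.
rewrite -big_distrr /=.
case: (boolP (j <= #|S| * #|S|)%N) => Hjk.
  apply: ler_wpM2l; first exact: exprn_ge0.
  apply: cnt_bound => //.
    by rewrite muln_gt0 (leq_trans _ S2).
  exact: cardAS.
rewrite big1 ?mulr0 // => F /andP [sFA /eqP Fj].
move: Hjk; rewrite -Fj.
by rewrite (leq_trans (subset_leq_card sFA) (cardAS S)).
Qed.

Lemma e_le3 (R : realType) : expR (1 : R) <= 3.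
Proof.
have h1 : (7 / 8 : R) <= expR (- (1 / 8)).
  by apply: le_trans (expR_ge1Dx _); lra.
have h2 : (7 / 8 : R) ^+ 8 <= expR (- 1).
  have -> : (- 1 : R) = 8%:R * (- (1 / 8)) by lra.
  rewrite expRM_natl; apply: lerXn2r => //; rewrite nnegrE ?expR_ge0 //; lra.
have h3 : (1 / 3 : R) <= (7 / 8) ^+ 8.
  rewrite !exprS expr0; lra.
have h4 : expR (1 : R) = (expR (- 1))^-1 by rewrite expRN invrK.
rewrite h4.
have p : (0 : R) < 1 / 3 by lra.
rewrite -[3]invrK lef_pV2 ?posrE //; first by rewrite (le_trans _ h2) // -[3^-1]div1r.
Qed.

Lemma ln_ge1 (R : realType) (k : nat) : (3 <= k)%N -> 1 <= ln (k%:R : R).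
Proof.
move=> k3.
rewrite -[X in X <= _](expRK 1).
rewrite ler_ln ?posrE ?expR_gt0 ?ltr0n ?(leq_trans _ k3) //.
apply: (le_trans (e_le3 R)); by rewrite ler_nat.
Qed.

Lemma ln_lthalf (R : realType) (k : nat) : (0 < k)%N -> ln (k%:R : R) < k%:R / 2.
Proof.
move=> k0.
have kp : (0 : R) < k%:R by rewrite ltr0n.
have h : (k%:R : R) < expR (k%:R / 2).
  have -> : (k%:R / 2 : R) = 3%:R * (k%:R / 6) by lra.
  rewrite expRM_natl.
  apply: (@lt_le_trans _ _ ((1 + k%:R / 6) ^+ 3)).
    have h3 : (0:R) <= k%:R * (k%:R * k%:R) by rewrite !mulr_ge0 // ltW.
    have h4 : (0:R) <= (k%:R - 3) * (k%:R - 3) by rewrite -expr2 sqr_ge0.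
    rewrite !exprS expr0; nra.
  apply: lerXn2r; [rewrite nnegrE; lra | by rewrite nnegrE expR_ge0 | exact: expR_ge1Dx].
rewrite -[X in _ < X](expRK (k%:R / 2)).
by rewrite ltr_ln ?posrE ?expR_gt0.
Qed.

Lemma powE (R : realType) (x : R) m : 0 < x -> x ^+ m = expR (m%:R * ln x).
Proof. by move=> x0; rewrite expRM_natl lnK. Qed.

Lemma key (R : realType) (d : R) (n t k j : nat) :
  0 <= d -> (3 <= n)%N ->
  3 * ln ((d + 1) * expR 2) * ln (t%:R : R) <= ln (n%:R : R) ->
  (2 <= k)%N -> (k <= t)%N ->
  (k%:R + k%:R / ln (k%:R : R) <= j%:R :> R) -> (j <= k * k)%N ->
  (k + 3 <= j)%N /\
  expR (k%:R) * (n%:R / k%:R) ^+ k *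
    ((d / n%:R) ^+ j * (expR j%:R * ((k * k)%:R / j%:R) ^+ j))
  <= 64 / n%:R * (1 / 2) ^+ j.
Proof.
move=> d0 n3 hyp k2 kt thr jkk.
set kr : R := k%:R; set jr : R := j%:R; set nr : R := n%:R.
have k0 : 0 < kr by rewrite ltr0n (leq_trans _ k2).
have n0 : 0 < nr by rewrite ltr0n (leq_trans _ n3).
set u := ln kr.
have u0 : 0 < u by apply: ln_gt0; rewrite ltr1n.
have hu : u < kr / 2 by apply: ln_lthalf; rewrite (leq_trans _ k2).
have hm : (k + 3 <= j)%N.
  have h1 : 2 < kr / u by rewrite ltr_pdivlMr //; lra.
  have h2 : (k + 2)%:R < jr by rewrite natrD; lra.
  by move: h2; rewrite /jr ltr_nat; lia.
split => //.
have k3 : (3 <= k)%N.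
  have : (j <= k * k)%N := jkk; have : (k + 3 <= j)%N := hm; have : (2 <= k)%N := k2.
  clear; nia.
have u1 : 1 <= u by exact: ln_ge1.
have hjk : kr + 3 <= jr by move: hm; rewrite -(ler_nat R) natrD.
have hk : kr <= (jr - kr) * u.
  have : kr / u <= jr - kr by lra.
  by rewrite ler_pdivrMr.
set A := ln nr.
set l := ln (d + 1).
have l0 : 0 <= l by apply: ln_ge0; lra.
set c := ln (2 : R).
have c0 : 0 <= c by apply: ln_ge0; lra.
have c1 : c <= 1.
  by have := @le_ln1Dx R 1 ltac:(lra); rewrite /c (_ : (1 + 1 : R) = 2) //; lra.
have hA : 3 * (l + 2) * u <= A.
  have e1 : ln ((d + 1) * expR 2) = l + 2.
    by rewrite lnM ?posrE ?expR_gt0 ?expRK //; lra.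
  rewrite e1 in hyp; apply: le_trans hyp.
  apply: ler_wpM2l; first lra.
  have t0 : (0 < t)%N by rewrite (leq_trans _ kt) // (leq_trans _ k2).
  by rewrite /u /kr ler_ln ?posrE ?ltr0n ?ler_nat // (leq_trans _ k2).
have j0 : (0 < j)%N by rewrite (leq_trans _ hm) // addn3.
have jp : 0 < jr by rewrite ltr0n.
have RHS0 : 0 <= 64 / nr * (1 / 2) ^+ j.
  by rewrite mulr_ge0 ?exprn_ge0 ?divr_ge0 //; lra.
have [->|dp] := eqVneq d 0.
  by rewrite mul0r expr0n (gtn_eqF j0) mul0r mulr0.
have dpos : 0 < d by rewrite lt_neqAle eq_sym dp d0.
have b1 : ((k * k)%:R / jr) ^+ j <= kr ^+ j.
  apply: lerXn2r; [by rewrite nnegrE divr_ge0 // ltW | by rewrite nnegrE ltW | ].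
  rewrite ler_pdivrMr // natrM; apply: ler_wpM2l; first exact: ltW.
  lra.
apply: (@le_trans _ _ (expR kr * (nr / kr) ^+ k * ((d / nr) ^+ j * (expR jr * kr ^+ j)))).
  apply: ler_wpM2l; first by rewrite mulr_ge0 ?expR_ge0 ?exprn_ge0 ?divr_ge0 ?ltW.
  apply: ler_wpM2l; first by rewrite exprn_ge0 ?divr_ge0 ?ltW.
  by apply: ler_wpM2l; first exact: expR_ge0.
set a := ln d.
have al : a <= l by rewrite ler_ln ?posrE //; lra.
have eL : expR kr * (nr / kr) ^+ k * ((d / nr) ^+ j * (expR jr * kr ^+ j))
   = expR (kr + kr * (A - u) + (jr * (a - A) + (jr + jr * u))).
  rewrite !expRD (powE k (_ : 0 < nr / kr)) ?divr_gt0 //.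
  rewrite (powE j (_ : 0 < d / nr)) ?divr_gt0 // (powE j k0).
  by rewrite !ln_div ?posrE.
have eR : 64 / nr * (1 / 2) ^+ j = expR (6 * c - A + jr * (- c)).
  rewrite !expRD (powE j (_ : 0 < 1 / 2)); last lra.
  rewrite div1r lnV ?posrE //.
  have nP : nr \in Num.pos by rewrite posrE.
  have tP : (2:R) \in Num.pos by rewrite posrE.
  rewrite expRN /A (lnK nP) (expRM_natl 6) /c (lnK tP).
  congr (_ * _); congr (_ / _); rewrite !exprS expr0; lra.
rewrite eL eR ler_expR.
set m := jr - kr.
have hk2 : kr <= m * u by exact: hk.
have hj : jr = kr + m by rewrite /m; lra.
rewrite hj.
have m3 : 3 <= m by rewrite /m; lra.
have h1 : 0 <= (m - 1) * (A - 3 * (l + 2) * u) by apply: mulr_ge0; lra.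
have h2 : 0 <= (kr + m) * (l - a) by apply: mulr_ge0; lra.
have h3a : 0 <= (m - 3) * (u - 1) by apply: mulr_ge0; lra.
have h3b : 0 <= m * (u - 1) by apply: mulr_ge0; lra.
have h3 : 0 <= l * (3 * (m - 1) * u - kr - m) by apply: mulr_ge0; nra.
have h4 : 0 <= (2 + c) * (m * u - kr) by apply: mulr_ge0; lra.
have h5 : 0 <= (u - 1) * (3 - 3 * c) by apply: mulr_ge0; lra.
have h6 : 0 <= (m - 3) * (2 - 2 * c) by apply: mulr_ge0; lra.
have h7 : 0 <= (3 - c) * ((m - 3) * (u - 1)) by apply: mulr_ge0; lra.
nra.
Qed.

Lemma geo_eq (R : realFieldType) (a N : nat) :
  \sum_(j < N) (if (a <= j)%N then (1/2 : R) ^+ j else 0)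
  = 2 * (1/2) ^+ a - 2 * (1/2) ^+ (maxn a N).
Proof.
elim: N => [|N IH].
  by rewrite big_ord0 maxn0 subrr.
rewrite big_ord_recr /= IH.
case: (leqP a N) => aN.
  rewrite (maxn_idPr (leq_trans aN (leqnSn N))) exprS; lra.
by rewrite (maxn_idPl aN) addr0.
Qed.

Lemma geo (R : realFieldType) (a N : nat) :
  \sum_(j < N) (if (a <= j)%N then (1/2 : R) ^+ j else 0) <= 2 * (1/2) ^+ a.
Proof.
rewrite geo_eq gerBl // mulr_ge0 // exprn_ge0 //; lra.
Qed.


Lemma per_k (R : realType) (d : R) (n t k M : nat) :
  0 <= d -> (3 <= n)%N ->
  3 * ln ((d + 1) * expR 2) * ln (t%:R : R) <= ln (n%:R : R) ->
  \sum_(S : {set 'I_n} | true && (#|S| == k))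
    (if (2 <= #|S|)%N && (#|S| <= t)%N then
       \sum_(j < M)
         (if thr R #|S| j && (j <= #|S| * #|S|)%N
          then (d / n%:R) ^+ j * (expR (j%:R) * ((#|S| * #|S|)%:R / j%:R) ^+ j) else 0)
     else 0)
  <= 64 / n%:R * (if (2 <= k)%N then 2 * (1/2) ^+ (k + 3) else 0).
Proof.
move=> d0 n3 hyp.
have n0 : (0:R) < n%:R by rewrite ltr0n (leq_trans _ n3).
set Hk := (if (2 <= k)%N && (k <= t)%N then
       \sum_(j < M)
         (if thr R k j && (j <= k * k)%N
          then (d / n%:R) ^+ j * (expR (j%:R) * ((k * k)%:R / j%:R) ^+ j) else 0)
     else 0).
rewrite (eq_bigr (fun _ => 1 * Hk)); last by move=> S /andP[_ /eqP ->]; rewrite mul1r.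
rewrite -big_distrl /=.
have RHS0 : 0 <= 64 / n%:R * (if (2 <= k)%N then 2 * (1/2 : R) ^+ (k + 3) else 0).
  apply: mulr_ge0; first by rewrite divr_ge0 // ltW.
  case: ifP => _ //.
rewrite /Hk; case: (boolP ((2 <= k)%N && (k <= t)%N)) => [/andP [k2 kt]|_]; last by rewrite mulr0.
have k0 : (0 < k)%N by rewrite (leq_trans _ k2).
have Hk0 : 0 <= \sum_(j < M)
         (if thr R k j && (j <= k * k)%N
          then (d / n%:R) ^+ j * (expR (j%:R) * ((k * k)%:R / j%:R) ^+ j) else 0).
  apply: sumr_ge0 => j _; case: ifP => _ //.
  apply: mulr_ge0; [apply: exprn_ge0; rewrite divr_ge0 // ltW | apply: mulr_ge0; [exact: expR_ge0 | apply: exprn_ge0; rewrite divr_ge0 //]].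
apply: (@le_trans _ _ ((expR (k%:R) * (n%:R / k%:R) ^+ k) * \sum_(j < M)
         (if thr R k j && (j <= k * k)%N
          then (d / n%:R) ^+ j * (expR (j%:R) * ((k * k)%:R / j%:R) ^+ j) else 0))).
  apply: ler_wpM2r => //.
  rewrite (eq_bigl (fun S : {set 'I_n} => (S \subset [set: 'I_n]) && (#|S| == k))); last first.
    by move=> S; rewrite (finset.subsetT S).
  have := @cnt_bound R _ [set: 'I_n] k n k0 (leq_trans _ n3) ltac:(by rewrite cardsT card_ord).
  by move=> H; apply: H.
rewrite k2 /= big_distrr /=.
apply: (@le_trans _ _ (64 / n%:R * \sum_(j < M) (if (k + 3 <= j)%N then (1/2 : R) ^+ j else 0))).
  rewrite big_distrr /=; apply: ler_sum => j _.
  case: (boolP (thr R k j && (j <= k * k)%N)) => [/andP [th jk]|_].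
    have [h1 h2] := @key R d n t k j d0 n3 hyp k2 kt th jk.
    by rewrite h1.
  rewrite mulr0; case: ifP => _; last by rewrite mulr0.
  apply: mulr_ge0; first by rewrite divr_ge0 // ltW.
  apply: exprn_ge0; lra.
apply: ler_wpM2l; first by rewrite divr_ge0 ?ltW.
exact: geo.
Qed.

Theorem mainTheorem10 (R : realType) (d : R) (n t : nat) :
  0 <= d -> (3 <= n)%N -> (2 <= t)%N ->
  3 * ln ((d + 1) * expR 2) * ln (t%:R : R) <= ln (n%:R : R) ->
  @Gnp_prob R n (d / n%:R) (@dense_small_event R n t) <= 15 / n%:R.
Proof.
move=> d0 n3 t2 hyp.
have n0 : (0:R) < n%:R by rewrite ltr0n (leq_trans _ n3).
have dn : d <= n%:R.
  have c2 : 1/2 <= ln (2:R).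
    have := @le_ln1Dx R (-(1/2)) ltac:(lra).
    rewrite (_ : 1 + - (1/2) = (2:R)^-1); last lra.
    rewrite lnV ?posrE //; lra.
  have lt2 : ln (2:R) <= ln (t%:R) by rewrite ler_ln ?posrE ?ltr0n ?ler_nat // (leq_trans _ t2).
  have e1 : ln ((d + 1) * expR 2) = ln (d + 1) + 2.
    by rewrite lnM ?posrE ?expR_gt0 ?expRK //; lra.
  rewrite e1 in hyp.
  have l0 : 0 <= ln (d + 1) by apply: ln_ge0; lra.
  have h : 0 <= (ln (d + 1) + 2) * (ln (t%:R : R) - 1/2) by apply: mulr_ge0; lra.
  have : ln (d + 1) <= ln (n%:R : R) by nra.
  rewrite ler_ln ?posrE //; lra.
have p01 : 0 <= d / n%:R <= 1.
  by apply/andP; split; [rewrite divr_ge0 // ltW | rewrite ler_pdivrMr // mul1r].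
apply: le_trans (union_bound _ _ p01) _.
apply: le_trans (ler_sum _ (fun S _ => @per_S R n t (d / n%:R) S (proj1 (andP p01)))) _.
rewrite (@regroup _ _ xpredT (fun S : {set 'I_n} => #|S|) n.+1); last first.
  by move=> S; rewrite ltnS; apply: (leq_trans (max_card _)); rewrite card_ord.
have H := fun k : 'I_n.+1 => @per_k R d n t k #|{set 'I_n}|.+1 d0 n3 hyp.
refine (le_trans (@ler_sum _ _ (index_enum _) xpredT _ _ (fun k _ => H k)) _).
rewrite -big_distrr /=.
rewrite (eq_bigr (fun k : 'I_n.+1 => (2 * (1/2) ^+ 3) * (if (2 <= k)%N then (1/2 : R) ^+ k else 0))); last first.
  by move=> k _; case: ifP => _; rewrite ?mulr0 // exprD; lra.
rewrite -big_distrr /=.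
apply: (@le_trans _ _ (64 / n%:R * (2 * (1 / 2) ^+ 3 * (2 * (1/2) ^+ 2)))).
  apply: ler_wpM2l; first by rewrite divr_ge0 ?ltW.
  apply: ler_wpM2l; first by rewrite mulr_ge0 ?exprn_ge0 //; lra.
  exact: geo.
rewrite !exprS !expr0 !mulr1.
have : 0 < (n%:R : R)^-1 by rewrite invr_gt0.
lra.
Qed.
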